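(* For $n\ge0$ let $\overline{I_n}:=I-I_n\in\Gamma$. The set $S=\{\overline{I_n}\mid n\ge0\}$ is a left denominator set in $\Gamma$, i.e. $I\in S$, $S\cdot S\subset S$, and (i) for every $\overline{I_n}\in S$ and $E\in\Gamma$ there are $\overline{I_m}\in S$ and $E'\in\Gamma$ with $E'\overline{I_n}=\overline{I_m}E$; (ii) if $\overline{I_n}\in S$ and $E\in\Gamma$ satisfy $E\overline{I_n}=0$, then there is $\overline{I_m}\in S$ with $\overline{I_m}E=0$. Moreover, the localized $k$-algebra $\Gamma[S^{-1}]$ (of left fractions) is naturally isomorphic to $\Sigma=\Gamma/M_\infty$.
   Context: $k$ is a commutative ring; matrices are indexed by $\mathbb{N}=\{1,2,\dots\}$. $\Gamma$ is the unital $k$-algebra of $\mathbb{N}\times\mathbb{N}$ matrices over $k$ having only finitely many distinct entries and such that for some $n_A$ every row and column has at most $n_A$ nonzero entries; $I$ is the identity matrix. $M_\infty\subset\Gamma$ is the two-sided ideal of matrices with finitely many nonzero entries, and $\Sigma:=\Gamma/M_\infty$. For $n\ge0$, $I_n$ is the matrix with $(I_n)_{i,j}=1$ if $i=j\le n$ and $0$ otherwise (so $I_0=0$). *)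

(* Defs.v *)
(* N x N matrices over k are modelled as functions
   nat -> nat -> k, with the paper's index i in N = {1,2,...} represented
   by the nat i-1 (0-based). *)
From HB Require Import structures.
From mathcomp Require Import all_boot all_order all_algebra.
From Stdlib Require Import ClassicalEpsilon.
Set Implicit Arguments. Unset Strict Implicit. Unset Printing Implicit Defensive.
Import GRing.Theory.
Local Open Scope ring_scope.

Section Mats.
Variable k : comPzRingType.

Definition mat := nat -> nat -> k.

(* Sum of a function nat -> k with finite support (0 if the support is
   infinite; this case never arises for the products considered here). *)
Definition fsum (f : nat -> k) : k :=
  match excluded_middle_informative (exists n, forall j, (n <= j)%N -> f j = 0) with
  | left H => \sum_(j < proj1_sig (constructive_indefinite_description _ H)) f j
  | right _ => 0
  end.

Definition mzero : mat := fun _ _ => 0.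
Definition mid : mat := fun i j => if i == j then 1 else 0.
Definition madd (A B : mat) : mat := fun i j => A i j + B i j.
Definition mopp (A : mat) : mat := fun i j => - A i j.
Definition msub (A B : mat) : mat := madd A (mopp B).
Definition mmul (A B : mat) : mat := fun i l => fsum (fun j => A i j * B j l).

Definition is_Gamma (A : mat) : Prop :=
  (exists vals : seq k, forall i j, A i j \in vals) /\
  (exists nA : nat,
     (forall i (s : seq nat), uniq s -> (forall j, j \in s -> A i j != 0) ->
        (size s <= nA)%N) /\
     (forall j (s : seq nat), uniq s -> (forall i, i \in s -> A i j != 0) ->
        (size s <= nA)%N)).

Definition is_Minf (A : mat) : Prop :=
  exists n : nat, forall i j, (n <= i)%N \/ (n <= j)%N -> A i j = 0.

(* I_n : ones at the diagonal positions 1..n (0-based: i < n). *)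
Definition Imat (n : nat) : mat := fun i j => if (i == j) && (i < n)%N then 1 else 0.
Definition Ibar (n : nat) : mat := msub mid (Imat n).

Definition Gamma_ring_hom (R : pzRingType) (f : mat -> R) : Prop :=
  (forall A B, is_Gamma A -> is_Gamma B -> f (madd A B) = f A + f B) /\
  (forall A B, is_Gamma A -> is_Gamma B -> f (mmul A B) = f A * f B) /\
  f mid = 1.

Definition S_inverting (R : pzRingType) (f : mat -> R) : Prop :=
  forall n, exists y : R, y * f (Ibar n) = 1 /\ f (Ibar n) * y = 1.

(* A ring hom f : Gamma -> R factors (necessarily uniquely, as the quotient
   map pi : Gamma -> Sigma is surjective) through a ring hom
   Sigma = Gamma/M_inf -> R  iff  f vanishes on M_inf. *)
Definition factors_through_Sigma (R : pzRingType) (f : mat -> R) : Prop :=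
  forall A, is_Gamma A -> is_Minf A -> f A = 0.

(* The image pi(Ibar n) of Ibar n in Sigma is a unit of Sigma:
   there is E in Gamma with E*Ibar n = I and Ibar n*E = I modulo M_inf. *)
Definition Sigma_inverts_S : Prop :=
  forall n, exists E, is_Gamma E /\
    is_Minf (msub (mmul E (Ibar n)) mid) /\ is_Minf (msub (mmul (Ibar n) E) mid).

End Mats.

Arguments mzero {k}.
Arguments mid {k}.
Arguments Imat {k} n.
Arguments Ibar {k} n.
Arguments Sigma_inverts_S k : clear implicits.

(* Main.v *)
Require Import Defs.
From HB Require Import structures.
From mathcomp Require Import all_boot all_order all_algebra.
From Stdlib Require Import Classical FunctionalExtensionality ClassicalEpsilon.
Set Implicit Arguments. Unset Strict Implicit. Unset Printing Implicit Defensive.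
Import GRing.Theory.
Local Open Scope ring_scope.

Section H.
Variable k : comPzRingType.

Lemma sum_ext0 (f : nat -> k) N P : (N <= P)%N -> (forall j, (N <= j)%N -> f j = 0) ->
  \sum_(j < N) f j = \sum_(j < P) f j.
Proof.
move=> NP Hf. rewrite -!(big_mkord xpredT) (@big_cat_nat _ _ _ N 0 P _ _ (leq0n N) NP) /=.
rewrite [X in _ = _ + X]big_nat_cond [X in _ = _ + X]big1 ?addr0 // => j /andP[/andP[Hj _] _]; exact: Hf.
Qed.

Lemma fsum_eq (f : nat -> k) M : (forall j, (M <= j)%N -> f j = 0) ->
  fsum f = \sum_(j < M) f j.
Proof.
move=> HM; rewrite /fsum; case: excluded_middle_informative => [H|H]; last first.
  by exfalso; apply: H; exists M.
case: constructive_indefinite_description => N HN /=.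
rewrite (sum_ext0 (P := maxn N M) _ HN) ?leq_maxl //.
by rewrite (sum_ext0 (P := maxn N M) _ HM) ?leq_maxr.
Qed.

Lemma fsum_single (f : nat -> k) i : (forall j, j != i -> f j = 0) -> fsum f = f i.
Proof.
move=> H; rewrite (fsum_eq (M := i.+1)).
  rewrite big_ord_recr /= big1 ?add0r // => j _; apply: H; by rewrite neq_ltn ltn_ord.
by move=> j Hj; apply: H; rewrite neq_ltn Hj orbT.
Qed.

Lemma Ibar_E n i j : @Ibar k n i j = if (i == j) && (n <= i)%N then 1 else 0.
Proof.
rewrite /Ibar /msub /madd /mopp /mid /Imat; case: eqP => _ /=; last by rewrite oppr0 addr0.
by case: ltnP => _ /=; rewrite ?subrr ?oppr0 ?addr0.
Qed.

Lemma mmul_Ibar_l n (A : mat k) i l : mmul (Ibar n) A i l = if (n <= i)%N then A i l else 0.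
Proof.
rewrite /mmul (fsum_single (i := i)) ?Ibar_E ?eqxx /=.
  by case: ifP; rewrite ?mul1r ?mul0r.
by move=> j Hj; rewrite Ibar_E eq_sym (negbTE Hj) mul0r.
Qed.

Lemma mmul_Ibar_r n (A : mat k) i l : mmul A (Ibar n) i l = if (n <= l)%N then A i l else 0.
Proof.
rewrite /mmul (fsum_single (i := l)) ?Ibar_E ?eqxx /=.
  by case: ifP; rewrite ?mulr1 ?mulr0.
by move=> j Hj; rewrite Ibar_E (negbTE Hj) mulr0.
Qed.

Lemma matE (A B : mat k) : (forall i j, A i j = B i j) -> A = B.
Proof. by move=> H; do 2 (apply: functional_extensionality => ?); apply: H. Qed.

Lemma col_bound (E : mat k) nA j :
  (forall s, uniq s -> (forall i, i \in s -> E i j != 0) -> (size s <= nA)%N) ->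
  exists m, forall i, (m <= i)%N -> E i j = 0.
Proof.
move=> Hb; apply: NNPP => H.
have H' : forall m, exists i, (m <= i)%N /\ E i j != 0.
  move=> m; apply: NNPP => H2; apply: H; exists m => i Hi.
  case: (eqVneq (E i j) 0) => // Hne; exfalso; apply: H2; by exists i.
have : forall L, exists s, [/\ uniq s, size s = L & forall i, i \in s -> E i j != 0].
  elim=> [|L [s [us ss Hs]]]; first by exists [::].
  have [i [Hi Ei]] := H' (\max_(y <- s) y).+1.
  exists (i :: s); split.
  - rewrite /= us andbT; apply/negP => Hin; have Hle := @leq_bigmax_seq _ s xpredT id i Hin isT.
    by move: (leq_trans Hi Hle); rewrite ltnn.
  - by rewrite /= ss.
  - by move=> x; rewrite inE => /orP[/eqP ->|]; [|apply: Hs].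
move=> /(_ nA.+1) [s [us ss Hs]].
by move: (Hb s us Hs); rewrite ss ltnn.
Qed.

Lemma cols_bound (E : mat k) nA n :
  (forall j s, uniq s -> (forall i, i \in s -> E i j != 0) -> (size s <= nA)%N) ->
  exists m, forall i j, (m <= i)%N -> (j < n)%N -> E i j = 0.
Proof.
move=> Hb; elim: n => [|n [m Hm]]; first by exists 0%N.
have [m' Hm'] := col_bound (Hb n).
exists (maxn m m') => i j; rewrite geq_max => /andP[h1 h2]; rewrite ltnS leq_eqVlt.
by case/orP => [/eqP -> | Hj]; [apply: Hm' | apply: Hm].
Qed.

Lemma is_Gamma_mask (E : mat k) (P : pred nat) : is_Gamma E ->
  is_Gamma (fun i j => if P i then E i j else 0).
Proof.
move=> [[vals Hv] [nA [Hr Hc]]]; split.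
  by exists (0 :: vals) => i j; case: (P i); rewrite inE ?eqxx ?Hv ?orbT.
exists nA; split.
  move=> i s us Hs; apply: (Hr i s us) => j /Hs; by case: (P i); rewrite ?eqxx.
move=> j s us Hs; apply: (Hc j s us) => i /Hs; by case: (P i); rewrite ?eqxx.
Qed.

Lemma is_Gamma_Ibar n : is_Gamma (@Ibar k n).
Proof.
split.
  by exists [:: 0; 1] => i j; rewrite Ibar_E; case: ifP; rewrite !inE eqxx ?orbT.
exists 1%N; split.
  move=> i s us Hs; apply: (@uniq_leq_size _ s [:: i] us) => j /Hs.
  rewrite Ibar_E inE; case: ifP => [/andP[/eqP -> _] | _]; by rewrite ?eqxx.
move=> j s us Hs; apply: (@uniq_leq_size _ s [:: j] us) => i /Hs.
rewrite Ibar_E inE; case: ifP => [/andP[/eqP -> _] | _]; by rewrite ?eqxx.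
Qed.

Lemma is_Gamma_zero : is_Gamma (@mzero k).
Proof.
split; first by exists [:: 0] => i j; rewrite inE.
exists 0%N; split.
  move=> i s us Hs; apply: (@uniq_leq_size _ s [::] us) => j /Hs; by rewrite eqxx.
move=> j s us Hs; apply: (@uniq_leq_size _ s [::] us) => i /Hs; by rewrite eqxx.
Qed.

Lemma Ibar0 : @Ibar k 0 = mid.
Proof. apply: matE => i j; rewrite Ibar_E /mid andbT; by case: eqP. Qed.

Lemma Ibar_mul n m : mmul (@Ibar k n) (Ibar m) = Ibar (maxn n m).
Proof.
apply: matE => i j; rewrite mmul_Ibar_l !Ibar_E geq_max.
by case: (n <= i)%N; case: (i == j).
Qed.

End H.
Theorem proposition3p8 (k : comPzRingType) :
  (* S is a subset of Gamma *)
  (forall n, is_Gamma (@Ibar k n)) /\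
  (* I \in S *)
  (exists n, Ibar n = @mid k) /\
  (* S . S \subset S *)
  (forall n m, exists p, mmul (@Ibar k n) (Ibar m) = Ibar p) /\
  (* (i) left Ore condition *)
  (forall n (E : mat k), is_Gamma E ->
     exists m (E' : mat k), is_Gamma E' /\ mmul E' (Ibar n) = mmul (Ibar m) E) /\
  (* (ii) left reversibility *)
  (forall n (E : mat k), is_Gamma E -> mmul E (Ibar n) = @mzero k ->
     exists m, mmul (Ibar m) E = @mzero k) /\
  (* Gamma[S^-1] ~ Sigma: the quotient map pi : Gamma -> Sigma has the
     universal property of the localization Gamma[S^-1], i.e. pi inverts S, and
     every S-inverting ring hom Gamma -> R factors (uniquely) through pi. *)
  (Sigma_inverts_S k /\
   forall (R : pzRingType) (f : mat k -> R),
     Gamma_ring_hom f -> S_inverting f -> factors_through_Sigma f).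
Proof.
split; first exact: is_Gamma_Ibar.
split; first by exists 0%N; exact: Ibar0.
split; first by move=> n m; exists (maxn n m); exact: Ibar_mul.
split.
  move=> n E HE; have HG := HE; case: HE => _ [nA [_ Hc]].
  have [m Hm] := cols_bound n Hc.
  exists m, (fun i j => if (m <= i)%N then E i j else 0); split.
    exact: is_Gamma_mask.
  apply: matE => i l; rewrite mmul_Ibar_r mmul_Ibar_l.
  case: (leqP n l) => // Hl; case: ifP => // Hi; by rewrite Hm.
split.
  move=> n E HE H0; case: HE => _ [nA [_ Hc]].
  have [m Hm] := cols_bound n Hc.
  exists m; apply: matE => i l; rewrite mmul_Ibar_l /mzero.
  case: ifP => // Hi; case: (ltnP l n) => Hl; first exact: Hm.
  by move: (congr1 (fun M => M i l) H0); rewrite /= mmul_Ibar_r Hl.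
split.
  move=> n; exists mid; split; first by rewrite -Ibar0; exact: is_Gamma_Ibar.
  rewrite -Ibar0 !Ibar_mul max0n maxn0.
  suff HM : is_Minf (msub (Ibar n) (@Ibar k 0)) by split.
  exists n => i j Hij; rewrite /msub /madd /mopp !Ibar_E /=.
  move: Hij; case: (eqVneq i j) => [->|_] /=; last by rewrite oppr0 addr0.
  move=> Hj; have Hn : (n <= j)%N by case: Hj.
  by rewrite Hn subrr.
move=> R f [fadd [fmul f1]] finv A HA [n Hn].
have f0 : f mzero = 0.
  have := fadd _ _ (@is_Gamma_zero k) (@is_Gamma_zero k).
  have -> : madd mzero mzero = @mzero k by apply: matE => i j; rewrite /madd addr0.
  by move=> H; apply: (@addrI _ (f mzero)); rewrite addr0 -H.
have Hz : mmul (Ibar n) A = mzero.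
  apply: matE => i l; rewrite mmul_Ibar_l; case: ifP => // Hi; apply: Hn; by left.
have [y [Hy _]] := finv n.
by rewrite -[f A]mul1r -Hy -mulrA -fmul ?Hz ?f0 ?mulr0 //; exact: is_Gamma_Ibar.
Qed.
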